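(* For every $N\in\mathbb{N}^*$, \[ R(N)=-2\sum_{k=1}^N\ \sum_{\substack{1\le i\le A(k)-1\\ \rho_i(k)-\rho_{i-1}(k)\ge 1/N>\rho_{i+1}(k)-\rho_i(k)}} B_1\big(N\rho_i(k)\big). \]
   Context: For $E\subset\mathbb{R}$, $q(E)=\min\{q\in\mathbb{N}^*:\exists p\in\mathbb{Z},\ p/q\in E\}$ ($=\infty$ if $E\cap\mathbb{Q}=\emptyset$). For $t\in\mathbb{R}$ and $\delta>0$, $q(t,\delta)=q(]t-\delta,t])$. $S(N)=\sum_{j=1}^N q\big(](j-1)/N,j/N]\big)$ and $R(N)=S(N)-N\int_0^1 q(t,1/N)\,dt$. For $k\in\mathbb{N}^*$, $A(k)=\sum_{n\le k}\varphi(n)$ ($\varphi$ Euler's totient), and $0=\rho_0(k)<\rho_1(k)<\dots<\rho_{A(k)}(k)=1$ are the elements of $[0,1]$ that are rational numbers $p/q$ in lowest terms with $1\le q\le k$ (the Farey fractions of order $k$ in $[0,1]$). $B_1(x)=0$ if $x\in\mathbb{Z}$ and $B_1(x)=\{x\}-1/2$ otherwise. *)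

(* Defs.v *)
From mathcomp Require Import all_boot all_algebra.
From Stdlib Require Import Reals ZArith ClassicalEpsilon.
From Coquelicot Require Import Coquelicot.

Open Scope R_scope.

Definition has_frac (E : R -> Prop) (q : nat) : Prop :=
  q <> 0%nat /\ exists p : Z, E (IZR p / INR q).

(* q(E) = least such q; convention 0 when no rational lies in E
   (the paper's value is +oo; this case never occurs below). *)
Definition qset (E : R -> Prop) : nat :=
  match excluded_middle_informative (exists q, has_frac E q) with
  | left _ => epsilon (inhabits 0%nat)
                (fun q => has_frac E q /\ forall m, has_frac E m -> le q m)
  | right _ => 0%nat
  end.

Definition qtd (t delta : R) : nat := qset (fun x => t - delta < x <= t).

Definition S_N (N : nat) : R :=
  sum_n_m (fun j => INR (qset (fun x => INR (j - 1) / INR N < x <= INR j / INR N)))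
          1 N.

Definition R_N (N : nat) : R :=
  S_N N - INR N * RInt (fun t => INR (qtd t (/ INR N))) 0 1.

Definition int2Z (z : int) : Z :=
  match z with
  | Posz n => Z.of_nat n
  | Negz n => (- Z.of_nat n.+1)%Z
  end.

Definition rat2R (x : rat) : R := IZR (int2Z (numq x)) / IZR (int2Z (denq x)).

Definition farey_list (k : nat) : seq rat :=
  sort (fun x y : rat => preorder.Order.le x y)
       (undup [seq (GRing.mul (GRing.natmul (@GRing.one rat) p) (GRing.inv (GRing.natmul (@GRing.one rat) q))) | q <- seq.iota 1%nat k, p <- seq.iota 0%nat q.+1]).

Definition rho (k i : nat) : R := rat2R (nth (@GRing.zero rat) (farey_list k) i).

Definition A (k : nat) : nat := (\sum_(1 <= n < k.+1) totient n)%N.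

Definition B1_saw (x : R) : R :=
  if Req_EM_T (frac_part x) 0 then 0 else frac_part x - / 2.

(* Main.v *)
Require Import Defs.
From HB Require Import structures.
From mathcomp Require Import all_boot all_algebra.
From Stdlib Require Import Reals Lra Lia ClassicalEpsilon ZArith.
From Coquelicot Require Import Coquelicot.
From mathcomp Require Import zify.
Open Scope R_scope.
Lemma Rplus_assoc' : associative Rplus.
Proof. move=> x y z; by rewrite Rplus_assoc. Qed.
HB.instance Definition _ := Monoid.isComLaw.Build R 0 Rplus Rplus_assoc' Rplus_comm Rplus_0_l.

Import order.Order.TTheory GRing.Theory Num.Theory.
Import order.Order.Syntax.

Section FareyRat.
Local Open Scope ring_scope.

Definition fs (k : nat) : seq rat :=
  [seq (p%:R / q%:R) | q <- seq.iota 1 k, p <- seq.iota 0%nat q.+1].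

Lemma fl_def k : farey_list k = sort <=%O (undup (fs k)).
Proof. by []. Qed.

Lemma frac_eq (a b p q : nat) : (0 < b)%nat -> (0 < q)%nat ->
  (a%:R / b%:R = p%:R / q%:R :> rat) <-> (a * q = p * b)%nat.
Proof.
move=> hb hq.
have hb' : (b%:R : rat) != 0 by rewrite pnatr_eq0 -lt0n.
have hq' : (q%:R : rat) != 0 by rewrite pnatr_eq0 -lt0n.
split => h.
  by move/eqP: h; rewrite eqr_div // -!natrM eqr_nat => /eqP.
by apply/eqP; rewrite eqr_div // -!natrM h.
Qed.

Lemma mem_fs k y : (y \in fs k) <->
  exists q p, [/\ (1 <= q <= k)%nat, (p <= q)%nat & y = p%:R / q%:R].
Proof.
split.
  move/allpairsPdep => [q [p [hq hp ->]]].
  exists q, p; rewrite mem_iota in hq; rewrite mem_iota in hp; split => //; lia.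
move=> [q [p [hq hp ->]]]; apply/allpairsPdep; exists q, p; split => //.
  rewrite mem_iota; lia.
rewrite mem_iota; lia.
Qed.

Lemma mem_fl k y : (y \in farey_list k) <->
  exists q p, [/\ (1 <= q <= k)%nat, (p <= q)%nat & y = p%:R / q%:R].
Proof. by rewrite fl_def mem_sort mem_undup mem_fs. Qed.

Lemma fl_sorted k : path.sorted <%O (farey_list k).
Proof.
have := sort_lt_sorted (undup (fs k)); rewrite undup_uniq => h; exact: h.
Qed.

Lemma fs_succ k : fs k.+1 = fs k ++ [seq (p%:R / k.+1%:R : rat) | p <- seq.iota 0%nat k.+2].
Proof.
have e : seq.iota 1 k.+1 = seq.iota 1 k ++ [:: k.+1].
  by have := iotaD 1 k 1; rewrite addn1 add1n.
by rewrite /fs e allpairs_cat /= cats0.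
Qed.

Lemma count_iota (a : pred nat) n : count a (seq.iota 0%nat n) = (\sum_(0 <= d < n) a d)%nat.
Proof.
elim: n => [|n IH]; first by rewrite big_geq.
by have := iotaD 0 n 1; rewrite addn1 => ->; rewrite count_cat IH big_nat_recr //= addn0.
Qed.

Lemma size_fs_succ k : (0 < k)%nat ->
  size (undup (fs k.+1)) = (size (undup (fs k)) + totient k.+1)%nat.
Proof.
move=> hk.
set u := [seq (p%:R / k.+1%:R : rat) | p <- [seq p <- seq.iota 0%nat k.+2 | coprime p k.+1]].
have hu : uniq u.
  rewrite map_inj_in_uniq ?filter_uniq ?iota_uniq // => p p' _ _ /frac_eq h.
  have := h isT isT; rewrite !mulnS => e; apply/eqP; rewrite -(eqn_pmul2r (ltn0Sn k)).
  by apply/eqP; lia.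
have hdis : forall y, y \in u -> y \notin fs k.
  move=> y /mapP [p hp ->]; apply/negP => /mem_fs [q [a [hq ha e]]].
  rewrite mem_filter mem_iota in hp; case/andP: hp => hcop hp.
  move/frac_eq: e => /(_ isT) e.
  have hq0 : (0 < q)%nat by lia.
  have := e hq0 => {}e.
  have : (k.+1 %| q)%nat.
    rewrite -(@Gauss_dvdr _ p); last by rewrite coprime_sym.
    by rewrite e dvdn_mull.
  move/(dvdn_leq hq0); lia.
have hperm : perm_eq (undup (fs k.+1)) (undup (fs k) ++ u).
  apply: uniq_perm; first exact: undup_uniq.
    rewrite cat_uniq undup_uniq hu andbT /=.
    apply/hasPn => y /hdis; by rewrite mem_undup.
  move=> y; rewrite mem_cat !mem_undup fs_succ mem_cat.
  apply/idP/idP.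
    case/orP => [->//|/mapP [p hp ->]].
    rewrite mem_iota in hp.
    case hc : (coprime p k.+1).
      apply/orP; right; apply/mapP; exists p => //.
      by rewrite mem_filter hc mem_iota.
    apply/orP; left; apply/mem_fs.
    set g := gcdn p k.+1.
    have hg : (0 < g)%nat by rewrite gcdn_gt0 orbT.
    have hg1 : (1 < g)%nat.
      move: hc; rewrite /coprime -/g; case: g hg => [|[|g]] //.
    exists (k.+1 %/ g)%nat, (p %/ g)%nat; split.
    + apply/andP; split.
        by rewrite divn_gt0 // dvdn_leq // dvdn_gcdr.
      by rewrite -ltnS; apply: ltn_Pdiv.
    + by apply: leq_div2r; lia.
    + apply/frac_eq => //; first by rewrite divn_gt0 // dvdn_leq // dvdn_gcdr.
      have hp1 := divnK (dvdn_gcdl p k.+1).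
      have hK := divnK (dvdn_gcdr p k.+1).
      rewrite -/g in hp1 hK.
      move: hp1 hK; move: (p %/ g)%nat (k.+1 %/ g)%nat => a b hp1 hK.
      nia.
  case/orP => [->//|/mapP [p hp ->]].
  apply/orP; right; apply/mapP; exists p => //.
  by move: hp; rewrite mem_filter => /andP[].
rewrite (perm_size hperm) size_cat; congr addn.
rewrite size_map size_filter count_iota totient_count_coprime big_nat_recr //=.
have -> : coprime k.+1 k.+1 = false by rewrite /coprime gcdnn; clear -hk; case: k hk.
rewrite addn0; apply: eq_big_nat => d _; by rewrite coprime_sym.
Qed.

End FareyRat.

Section FareyRat2.
Local Open Scope ring_scope.

Definition fr (p q : nat) : rat := p%:R / q%:R.
Definition fnth (k i : nat) : rat := nth 0 (farey_list k) i.

Lemma int2Z_E (z : int) : int2Z z = ssrZ.Z_of_int z.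
Proof. case: z => n //=; by rewrite addn1. Qed.
Lemma int2Z_mul (a b : int) : int2Z (a * b) = (int2Z a * int2Z b)%Z.
Proof. rewrite !int2Z_E. lia. Qed.

Lemma frac_lt (a b p q : nat) : (0 < b)%nat -> (0 < q)%nat ->
  (fr a b < fr p q) = (a * q < p * b)%nat.
Proof.
move=> hb hq.
have hb' : (b%:R : rat) != 0 by rewrite pnatr_eq0 -lt0n.
have hq' : (q%:R : rat) != 0 by rewrite pnatr_eq0 -lt0n.
have hbq : 0 < (b%:R * q%:R : rat) by rewrite mulr_gt0 // ltr0n.
rewrite /fr -(ltr_pM2r hbq).
have e1 : a%:R / b%:R * (b%:R * q%:R) = (a * q)%:R :> rat by rewrite mulrA divfK // natrM.
have e2 : p%:R / q%:R * (b%:R * q%:R) = (p * b)%:R :> rat.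
  by rewrite [b%:R * _]mulrC mulrA divfK // natrM.
by rewrite e1 e2 ltr_nat.
Qed.

Lemma mem_fl_01 k y : y \in farey_list k -> 0 <= y <= 1.
Proof.
move/mem_fl => [q [p [hq hp ->]]].
have hq0 : (0 < q%:R :> rat) by rewrite ltr0n; lia.
apply/andP; split; first by rewrite divr_ge0 // ler0n.
by rewrite ler_pdivrMr // mul1r ler_nat.
Qed.

Lemma fl_size k : (0 < k)%nat -> size (farey_list k) = (A k).+1.
Proof.
rewrite fl_def size_sort.
elim: k => // k IH _.
case: k IH => [|k] IH.
  have -> : fs 1 = [:: 0; 1].
    by rewrite /fs /= mul0r mul1r invr1.
  by rewrite /= /A big_nat1.
rewrite size_fs_succ // IH // /A [in RHS]big_nat_recr //= addSn.
Qed.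

Lemma fl_sorted_nth k i j : (i < j)%nat -> (j < size (farey_list k))%nat ->
  fnth k i < fnth k j.
Proof.
move=> hij hj; rewrite /fnth.
apply: (sorted_ltn_nth lt_trans).
- exact: fl_sorted.
- rewrite inE; exact: ltn_trans hij hj.
- by rewrite inE.
- exact: hij.
Qed.

Lemma fnth_mem k i : (i < size (farey_list k))%nat -> fnth k i \in farey_list k.
Proof. move=> h; exact: mem_nth. Qed.

Lemma fl_in_sym k y : y \in farey_list k -> 1 - y \in farey_list k.
Proof.
move/mem_fl => [q [p [hq hp ->]]]; apply/mem_fl.
exists q, (q - p)%nat; split => //; try lia.
have hq' : (q%:R : rat) != 0 by rewrite pnatr_eq0; lia.
by rewrite natrB // mulrBl divff.
Qed.

Lemma fnth0 k : (0 < k)%nat -> fnth k 0 = 0.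
Proof.
move=> hk; set l := farey_list k.
have h0 : (0 : rat) \in l.
  apply/mem_fl; exists 1%nat, 0%nat; split => //; try lia.
have hs : (0 < size l)%nat by rewrite fl_size.
have hj := index_mem 0 l; rewrite h0 in hj.
case hj0 : (index 0 l) => [|j].
  by rewrite /fnth -/l -hj0 nth_index.
have := @fl_sorted_nth k 0%nat (index 0 l).
rewrite /fnth -/l nth_index // hj0 => /(_ isT); rewrite -hj0 => /(_ hj) h.
have := @mem_fl_01 _ _ ((@fnth_mem k 0%nat hs)); rewrite /fnth -/l => /andP[h1 _].
by move: (lt_le_trans h h1); rewrite ltxx.
Qed.

Lemma fnthA k : (0 < k)%nat -> fnth k (A k) = 1.
Proof.
move=> hk; set l := farey_list k.
have h1 : (1 : rat) \in l.
  apply/mem_fl; exists 1%nat, 1%nat; split => //; try lia.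
have hs := fl_size k hk.
have hj := index_mem 1 l; rewrite h1 in hj.
case: (ltngtP (index 1 l) (A k)) => hj0.
- have := @fl_sorted_nth k _ _ hj0; rewrite /fnth -/l nth_index // hs => /(_ (ltnSn _)) h.
  have := @mem_fl_01 _ _ ((@fnth_mem k (A k) _)); rewrite /fnth -/l hs => /(_ (ltnSn _)) /andP[_ h2].
  by move: (lt_le_trans h h2); rewrite ltxx.
- rewrite -/l hs in hj; lia.
- by rewrite /fnth -/l -hj0 nth_index.
Qed.

Lemma fnth_sym k i : (0 < k)%nat -> (i <= A k)%nat -> fnth k i = 1 - fnth k (A k - i).
Proof.
move=> hk hi; set l := farey_list k.
set l' := map (fun x => 1 - x) (rev l).
have hs := fl_size k hk.
have e : l' = l.
  apply: lt_sorted_eq; last first.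
  - move=> y; apply/idP/idP.
      move/mapP => [x hx ->]; rewrite mem_rev in hx; exact: fl_in_sym.
    move=> hy; apply/mapP; exists (1 - y); last by rewrite opprB addrC subrK.
    rewrite mem_rev; exact: fl_in_sym.
  - exact: fl_sorted.
  - rewrite sorted_map rev_sorted; apply: sub_sorted (fl_sorted k).
    by move=> x y h; rewrite /= ltrD2l ltrN2.
rewrite /fnth -/l -{1}e /l' (nth_map 0); last by rewrite size_rev hs.
rewrite nth_rev; last by rewrite hs.
by rewrite hs; congr (1 - nth _ _ _); lia.
Qed.

Lemma fnth_form k i : (i <= A k)%nat -> (0 < k)%nat ->
  exists q p, [/\ (1 <= q <= k)%nat, (p <= q)%nat & fnth k i = fr p q].
Proof.
move=> hi hk; apply/mem_fl; apply: fnth_mem; rewrite fl_size //.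
Qed.

Lemma fr_index k p q : (1 <= q <= k)%nat -> (p <= q)%nat ->
  exists i, (i <= A k)%nat /\ fnth k i = fr p q.
Proof.
move=> hq hp.
have hk : (0 < k)%nat by lia.
have hin : fr p q \in farey_list k by apply/mem_fl; exists q, p.
exists (index (fr p q) (farey_list k)); split.
  by have := index_mem (fr p q) (farey_list k); rewrite hin fl_size.
by rewrite /fnth nth_index.
Qed.

Lemma fr_numden p q : (0 < q)%nat ->
  (numq (fr p q)) * q%:Z = p%:Z * denq (fr p q).
Proof.
move=> hq; apply: (@intr_inj rat); rewrite !intrM numqE.
have hq' : (q%:R : rat) != 0 by rewrite pnatr_eq0; lia.
change ((q%:Z)%:~R : rat) with (q%:R : rat).
change ((p%:Z)%:~R : rat) with (p%:R : rat).
by rewrite mulrAC /fr divfK.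
Qed.

End FareyRat2.
Arguments fnth_form {k i}.

Section FareyRat3.
Local Open Scope ring_scope.

Lemma fnth_pair k i : (0 < k)%nat -> (i < A k)%nat ->
  exists a b p q, [/\ (0 < b)%nat, (0 < q)%nat, fnth k i = fr a b,
                   fnth k i.+1 = fr p q & (a * q < p * b)%nat].
Proof.
move=> hk hi.
have [b [a [hb ha e1]]] := fnth_form (ltnW hi) hk.
have [q [p [hq hp e2]]] := @fnth_form k i.+1 hi hk.
exists a, b, p, q; split => //; try lia.
rewrite -frac_lt; try lia.
rewrite -e1 -e2; apply: fl_sorted_nth => //; rewrite fl_size //.
Qed.

Lemma fnth_sym_fr k i : (0 < k)%nat -> (i <= A k)%nat ->
  exists p q, [/\ (0 < q)%nat, (p <= q)%nat, fnth k i = fr p q & fnth k (A k - i) = fr (q - p) q].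
Proof.
move=> hk hi.
have [q [p [hq hp e1]]] := fnth_form hi hk.
exists p, q; split => //; try lia.
have hq' : (q%:R : rat) != 0 by rewrite pnatr_eq0; lia.
rewrite fnth_sym //; last lia.
have -> : (A k - (A k - i))%nat = i by lia.
by rewrite e1 /fr natrB // mulrBl divff.
Qed.

Lemma fr01 : fr 0 1 = 0 /\ fr 1 1 = 1.
Proof. by rewrite /fr mulr0n mul0r mulr1n divr1. Qed.

End FareyRat3.
Arguments fnth_pair {k i}.
Arguments fnth_sym_fr {k i}.

Definition ind (P : Prop) : R := if excluded_middle_informative P then 1 else 0.
Lemma ind_T (P : Prop) : P -> ind P = 1.
Proof. by rewrite /ind; case: excluded_middle_informative. Qed.
Lemma ind_F (P : Prop) : ~ P -> ind P = 0.
Proof. by rewrite /ind; case: excluded_middle_informative. Qed.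
Lemma ind_ext (P Q : Prop) : (P <-> Q) -> ind P = ind Q.
Proof.
move=> h; rewrite /ind.
case: excluded_middle_informative => p; case: excluded_middle_informative => q //; exfalso; tauto.
Qed.

Lemma rsum0 a b (F : nat -> R) :
  (forall i, (a <= i < b)%nat -> F i = 0) -> \big[Rplus/0]_(a <= i < b) F i = 0.
Proof.
move=> h; rewrite big_nat_cond big1 // => i /andP[hi _]; exact: h.
Qed.

Lemma rsum_ext a b (F G : nat -> R) :
  (forall i, (a <= i < b)%nat -> F i = G i) ->
  \big[Rplus/0]_(a <= i < b) F i = \big[Rplus/0]_(a <= i < b) G i.
Proof. move=> h; apply: eq_big_nat => i hi; exact: h. Qed.

Lemma rsum_mull c a b (F : nat -> R) :
  c * \big[Rplus/0]_(a <= i < b) F i = \big[Rplus/0]_(a <= i < b) (c * F i).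
Proof.
apply: (big_rec2 (fun x y => c * x = y)); first by rewrite Rmult_0_r.
by move=> i y1 y2 _ <-; rewrite Rmult_plus_distr_l.
Qed.

Lemma rsum_sub a b (F G : nat -> R) :
  \big[Rplus/0]_(a <= i < b) (F i - G i) =
  \big[Rplus/0]_(a <= i < b) F i - \big[Rplus/0]_(a <= i < b) G i.
Proof.
apply: (big_rec3 (fun x y z => x = y - z)); first by rewrite Rminus_0_r.
by move=> i y1 y2 y3 _ ->; ring.
Qed.

Lemma is_RInt0 u v : is_RInt (fun _ => 0) u v 0.
Proof. have := is_RInt_const u v 0. by rewrite /scal /= /mult /= Rmult_0_r. Qed.

Lemma is_RInt_rsum a b (f : nat -> R -> R) (I : nat -> R) u v :
  (forall i, (a <= i < b)%nat -> is_RInt (f i) u v (I i)) ->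
  is_RInt (fun t => \big[Rplus/0]_(a <= i < b) f i t) u v
          (\big[Rplus/0]_(a <= i < b) I i).
Proof.
elim: b => [|b IH] h.
  rewrite big_geq //; apply: (is_RInt_ext (fun _ => 0)) => [x _|].
    by rewrite big_geq.
  exact: is_RInt0.
case: (leqP a b) => hab; last first.
  rewrite big_geq //; apply: (is_RInt_ext (fun _ => 0)) => [x _|].
    by rewrite big_geq.
  exact: is_RInt0.
rewrite big_nat_recr //=.
apply: (is_RInt_ext (fun t => plus (\big[Rplus/0]_(a <= i < b) f i t) (f b t))).
  by move=> x _; rewrite big_nat_recr.
apply: is_RInt_plus.
  apply: IH => i /andP[h1 h2]; apply: h; apply/andP; split => //; exact: ltnW.
apply: h; apply/andP; split => //.
Qed.

Definition H (u v t : R) : R := ind (u <= t /\ t < v).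

Lemma is_RInt_H u v : 0 <= u -> v <= 1 ->
  is_RInt (H u v) 0 1 (ind (u <= v) * (v - u)).
Proof.
move=> hu hv; case: (Rlt_or_le u v) => huv; last first.
  have -> : ind (u <= v) * (v - u) = 0.
    case: (Req_dec u v) => e; first by rewrite e; ring.
    by rewrite ind_F ?Rmult_0_l //; lra.
  apply: (is_RInt_ext (fun _ => 0)); last exact: is_RInt0.
  by move=> x _; rewrite /H ind_F //; lra.
rewrite ind_T; last lra.
have -> : 1 * (v - u) = plus (plus 0 (v - u)) 0 by rewrite /plus /=; ring.
apply: (is_RInt_Chasles _ 0 v 1); first apply: (is_RInt_Chasles _ 0 u v).
- apply: (is_RInt_ext (fun _ => 0)); last exact: is_RInt0.
  move=> x; rewrite Rmin_left ?Rmax_right; try lra.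
  by move=> hx; rewrite /H ind_F //; lra.
- apply: (is_RInt_ext (fun _ => 1)).
    move=> x; rewrite Rmin_left ?Rmax_right; try lra.
    by move=> hx; rewrite /H ind_T //; lra.
  have := is_RInt_const u v 1. by rewrite /scal /= /mult /= Rmult_1_r.
- apply: (is_RInt_ext (fun _ => 0)); last exact: is_RInt0.
  move=> x; rewrite Rmin_left ?Rmax_right; try lra.
  by move=> hx; rewrite /H ind_F //; lra.
Qed.

Definition cnt (N : nat) (y : R) : R := \big[Rplus/0]_(0 <= j < N.+1) ind (INR j < y).
Definition D (N : nat) (y : R) : R := cnt N (INR N * y) - INR N * y.

Lemma count_min n M :
  \big[Rplus/0]_(0 <= j < M) ind ((j < n)%nat) = INR (minn n M).
Proof.
elim: M => [|M IH]; first by rewrite big_geq // minn0.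
rewrite big_nat_recr //= IH.
case: (ltnP M n) => h.
  rewrite ind_T //.
  have -> : minn n M.+1 = M.+1 by lia.
  by rewrite S_INR.
rewrite ind_F //.
have -> : minn n M.+1 = n by lia.
ring.
Qed.

Lemma cnt_val N y n : (n <= N.+1)%nat ->
  (forall j : nat, INR j < y <-> (j < n)%nat) -> cnt N y = INR n.
Proof.
move=> hn h; rewrite /cnt (rsum_ext _ _ _ (fun j => ind ((j < n)%nat))).
  by rewrite count_min; congr INR; lia.
by move=> j _; apply: ind_ext.
Qed.

Lemma INR_div_le a s n : 0 < n -> (a <= s / n <-> n * a <= s).
Proof.
move=> hn; have e : s / n * n = s by field; lra.
split=> h; nra.
Qed.
Lemma INR_div_lt a s n : 0 < n -> (s / n < a <-> s < n * a).
Proof.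
move=> hn; have e : s / n * n = s by field; lra.
split=> h; nra.
Qed.

Lemma INR_div_le_r a s n : 0 < n -> (s / n <= a <-> s <= n * a).
Proof.
move=> hn; have e : s / n * n = s by field; lra.
split=> h; nra.
Qed.

Lemma grid_H N u v : (0 < N)%nat -> 0 < u ->
  \big[Rplus/0]_(1 <= j < N.+1) H u v (INR j / INR N) =
  ind (u <= v) * (cnt N (INR N * v) - cnt N (INR N * u)).
Proof.
move=> hN hu; have hN' : 0 < INR N by apply: lt_0_INR; apply/ssrnat.ltP.
case: (Rle_or_lt u v) => huv; last first.
  rewrite ind_F; last lra.
  rewrite Rmult_0_l rsum0 // => j _; rewrite /H ind_F //; lra.
rewrite ind_T // Rmult_1_l /cnt -rsum_sub [RHS]big_nat_recl // big_add1.
rewrite (ind_T (INR 0 < INR N * v)); last by rewrite /=; nra.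
rewrite (ind_T (INR 0 < INR N * u)); last by rewrite /=; nra.
rewrite Rminus_diag Rplus_0_l; apply: rsum_ext => j _.
rewrite /H.
have h1 := INR_div_le u (INR j.+1) (INR N) hN'.
have h2 := INR_div_lt v (INR j.+1) (INR N) hN'.
have imp : INR j.+1 < INR N * u -> INR j.+1 < INR N * v by nra.
have nr : INR N * u <= INR j.+1 -> ~ INR j.+1 < INR N * u by lra.
have nr2 : ~ INR j.+1 < INR N * u -> INR N * u <= INR j.+1 by move=> ?; lra.
move: h1 h2 imp nr nr2; set s := INR j.+1; set t := s / INR N => h1 h2 imp nr nr2.
rewrite /ind.
case: excluded_middle_informative => p;
case: excluded_middle_informative => q;
case: excluded_middle_informative => r; try (simpl; ring); exfalso; tauto.
Qed.

Lemma cnt_shift N y : 0 <= y <= INR N - 1 -> cnt N (y + 1) = cnt N y + 1.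
Proof.
move=> hy; rewrite /cnt big_nat_recl // big_nat_recr //.
rewrite ind_T; last by rewrite /=; lra.
rewrite (ind_F (INR N < y)); last lra.
have E : \big[Rplus/0]_(0 <= i < N) ind (INR i.+1 < y + 1) =
          \big[Rplus/0]_(0 <= i < N) ind (INR i < y).
  apply: rsum_ext => j _; apply: ind_ext; rewrite S_INR; lra.
rewrite E /=; ring.
Qed.

Lemma D_shift N x : (0 < N)%nat -> 0 <= x -> x + / INR N <= 1 ->
  D N (x + / INR N) = D N x.
Proof.
move=> hN hx hx1; have hN' : 0 < INR N by apply: lt_0_INR; apply/ssrnat.ltP.
rewrite /D.
have e : INR N * (x + / INR N) = INR N * x + 1 by field; lra.
rewrite e cnt_shift; first ring.
split; first nra.
have : INR N * (x + / INR N) <= INR N * 1 by apply: Rmult_le_compat_l; lra.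
lra.
Qed.

Lemma D0 N : D N 0 = 0.
Proof.
rewrite /D Rmult_0_r (cnt_val N 0 0) //=; first ring.
move=> j; split => h; [have := pos_INR j; lra | done].
Qed.

Lemma D1 N : D N 1 = 0.
Proof.
rewrite /D Rmult_1_r (cnt_val N (INR N) N) //=; first ring.
move=> j; split => h.
  apply/ssrnat.ltP; apply: INR_lt; done.
by apply: lt_INR; apply/ssrnat.ltP.
Qed.

Lemma ltn_INR (a b : nat) : (a < b)%nat <-> INR a < INR b.
Proof. split => h; [apply: lt_INR; exact/ssrnat.ltP | apply/ssrnat.ltP; exact: INR_lt]. Qed.
Lemma len_INR (a b : nat) : (a <= b)%nat <-> INR a <= INR b.
Proof. split => h; [apply: le_INR; exact/ssrnat.leP | apply/ssrnat.leP; exact: INR_le]. Qed.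

Lemma INR_subn (a b : nat) : (b <= a)%nat -> INR (a - b)%nat = INR a - INR b.
Proof. move=> h; rewrite -minus_INR //; exact/ssrnat.leP. Qed.

Lemma D_B1 N x : (0 < N)%nat -> 0 <= x <= 1 ->
  D N x - D N (1 - x) = -2 * B1_saw (INR N * x).
Proof.
move=> hN hx; have hN' : 0 < INR N by apply: lt_0_INR; apply/ssrnat.ltP.
rewrite /D.
have e1 : INR N * (1 - x) = INR N - INR N * x by ring.
have hy : 0 <= INR N * x <= INR N by split; nra.
rewrite e1; move: hy; move: (INR N * x) => y hy.
have [hz1 hz2] := archimed y.
have hfr0 : frac_part y = y - (IZR (up y) - 1).
  by rewrite /frac_part /Int_part minus_IZR.
move: hz1 hz2 hfr0; move: (up y) => z hz1 hz2 hfr0.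
have hz : (0 < z)%Z by apply: lt_IZR; simpl; lra.
have [n hn] : exists n : nat, INR n = IZR z - 1.
  exists (Z.to_nat (z - 1)).
  rewrite INR_IZR_INZ Z2Nat.id; last lia.
  by rewrite minus_IZR.
have hfr : frac_part y = y - INR n by rewrite hfr0 hn.
rewrite /B1_saw hfr.
case: Req_EM_T => hf /=.
- have eyn : y = INR n by lra.
  have hnN : (n <= N)%nat by apply/len_INR; lra.
  rewrite (cnt_val N y n); last first.
  + move=> j; rewrite eyn; split; [move/ltn_INR | move=> h; exact/ltn_INR]; done.
  + lia.
  rewrite (cnt_val N (INR N - y) (N - n)); last first.
  + move=> j; rewrite eyn -INR_subn //.
    split; [move/ltn_INR | move=> h; exact/ltn_INR]; done.
  + lia.
  rewrite INR_subn //.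
  rewrite eyn; ring.
- have hlt : INR n < y < INR n + 1 by lra.
  have hnN : (n < N)%nat by apply/ltn_INR; lra.
  rewrite (cnt_val N y n.+1); last first.
  + move=> j; split => h.
    * apply/ltn_INR; rewrite S_INR; lra.
    * have : (j <= n)%nat by lia.
      move/len_INR; lra.
  + lia.
  rewrite (cnt_val N (INR N - y) (N - n)); last first.
  + move=> j; split => h.
    * apply/ltn_INR; rewrite INR_subn; [lra | lia].
    * have h2 : (j.+1 <= N - n)%nat by lia.
      move/len_INR: h2; rewrite S_INR INR_subn; last lia.
      lra.
  + lia.
  rewrite S_INR INR_subn; last lia.
  field.
Qed.

Definition incr (x : nat -> R) (m : nat) := forall i, (i < m)%nat -> x i < x i.+1.

Lemma incr_lt x m i j : incr x m -> (i < j)%nat -> (j <= m)%nat -> x i < x j.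
Proof.
move=> hx; elim: j => [//|j IH] hij hj.
case: (ltngtP i j) => h.
- apply: Rlt_trans (IH h (ltnW hj)) (hx j hj).
- lia.
- by rewrite h; apply: hx.
Qed.

Arguments incr_lt {x m i j}.

Lemma incr_le x m i j : incr x m -> (i <= j)%nat -> (j <= m)%nat -> x i <= x j.
Proof.
move=> hx hij hj; case: (ltngtP i j) => h.
- by apply: Rlt_le; apply: (incr_lt hx h hj).
- lia.
- by rewrite h; apply: Rle_refl.
Qed.

Arguments incr_le {x m i j}.

Lemma rsum_single a b k (F : nat -> R) : (a <= k < b)%nat ->
  (forall i, (a <= i < b)%nat -> i <> k -> F i = 0) ->
  \big[Rplus/0]_(a <= i < b) F i = F k.
Proof.
move=> /andP[hak hkb] h.
rewrite (big_cat_nat hak (ltnW hkb)) (@big_ltn _ _ _ k b) //.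
have -> : \big[Rplus/0]_(a <= i < k) F i = 0 by apply: rsum0 => i /andP[h1 h2]; apply: h; [apply/andP; split|]; lia.
have -> : \big[Rplus/0]_(k.+1 <= i < b) F i = 0 by apply: rsum0 => i /andP[h1 h2]; apply: h; [apply/andP; split|]; lia.
rewrite /=; ring.
Qed.

Lemma pointwise x m d t : incr x m -> x 0%nat = 0 -> x m = 1 -> 0 < d -> 0 < t <= 1 ->
  ind (~ exists i, (i <= m)%nat /\ t - d < x i <= t) =
  \big[Rplus/0]_(1 <= i < m.+1) H (x i.-1 + d) (x i) t.
Proof.
move=> hx h0 hm hd ht.
pose P i := (i <= m)%nat && (if Rle_dec t (x i) then true else false).
have exP : exists i, P i.
  exists m; rewrite /P leqnn /=; case: Rle_dec => // hn; exfalso; lra.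
case: (ex_minnP exP) => i0 /andP[hi0m hti0] hmin.
have hti : t <= x i0 by move: hti0; case: Rle_dec.
have hi0 : (0 < i0)%nat.
  case: i0 hi0m hti0 hti hmin => // _ _ h _; lra.
have hk : x i0.-1 < t.
  case: (Rlt_or_le (x i0.-1) t) => // h.
  have : (i0 <= i0.-1)%nat.
    apply: hmin; rewrite /P; apply/andP; split; first lia.
    by case: Rle_dec.
  lia.
rewrite (@rsum_single 1 m.+1 i0); last first.
- move=> i hi hne; rewrite /H ind_F //.
  case: (ltngtP i i0) => h; last by [].
  + have : x i <= x i0.-1 by apply: (incr_le hx); lia.
    lra.
  + have : x i0 <= x i.-1 by apply: (incr_le hx); lia.
    lra.
- lia.
rewrite /H; apply: ind_ext; split.
- move=> hne.
  have h1 : x i0.-1 <= t - d.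
    case: (Rle_or_lt (x i0.-1) (t - d)) => // h.
    exfalso; apply: hne; exists i0.-1; split; [lia | lra].
  split; first lra.
  case: (Rlt_or_le t (x i0)) => // h.
  exfalso; apply: hne; exists i0; split => //; lra.
- move=> [h1 h2] [i [him [hi1 hi2]]].
  have hii : (i < i0)%nat.
    case: (ltnP i i0) => // h.
    have : x i0 <= x i by apply: (incr_le hx).
    lra.
  have : x i <= x i0.-1 by apply: (incr_le hx); lia.
  lra.
Qed.

Lemma list_contrib N x m : (0 < N)%nat -> incr x m -> x 0%nat = 0 -> x m = 1 ->
  \big[Rplus/0]_(1 <= i < m.+1)
     (\big[Rplus/0]_(1 <= j < N.+1) H (x i.-1 + / INR N) (x i) (INR j / INR N)
      - INR N * (ind (x i.-1 + / INR N <= x i) * (x i - (x i.-1 + / INR N))))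
  = \big[Rplus/0]_(1 <= i < m.+1)
      (ind (/ INR N <= x i - x i.-1) * (D N (x i) - D N (x i.-1))).
Proof.
move=> hN hx h0 hm; have hN' : 0 < INR N by apply: lt_0_INR; apply/ssrnat.ltP.
have hd : 0 < / INR N by apply: Rinv_0_lt_compat.
apply: rsum_ext => i /andP[hi1 hi2].
have hx0 : 0 <= x i.-1 by rewrite -h0; apply: (incr_le hx); lia.
have hx1 : x i <= 1 by rewrite -hm; apply: (incr_le hx); lia.
rewrite grid_H //; last lra.
rewrite (ind_ext _ (/ INR N <= x i - x i.-1)); last by split; lra.
case: (Rle_or_lt (/ INR N) (x i - x i.-1)) => h.
  rewrite ind_T // -(D_shift N (x i.-1)) //; last lra.
  rewrite /D; ring.
rewrite ind_F; last lra.
ring.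
Qed.

Lemma telescope N x m : (0 < N)%nat -> (0 < m)%nat -> incr x m -> x 0%nat = 0 -> x m = 1 ->
  (forall i, (i <= m)%nat -> x (m - i)%nat = 1 - x i) ->
  \big[Rplus/0]_(1 <= i < m.+1)
      (ind (/ INR N <= x i - x i.-1) * (D N (x i) - D N (x i.-1)))
  = -2 * \big[Rplus/0]_(1 <= i < m)
      (if Rle_dec (/ INR N) (x i - x (i - 1)%nat)
       then if Rlt_dec (x (i + 1)%nat - x i) (/ INR N)
            then B1_saw (INR N * x i) else 0
       else 0).
Proof.
move=> hN hm0 hx h0 hm hsym.
set d := / INR N.
set a := fun i => ind (d <= x i - x i.-1).
have E1 : \big[Rplus/0]_(1 <= i < m.+1) (a i * (D N (x i) - D N (x i.-1)))
   = \big[Rplus/0]_(1 <= i < m) ((a i - a i.+1) * D N (x i)).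
  rewrite (rsum_ext _ _ _ (fun i => a i * D N (x i) - a i * D N (x i.-1))); last first.
    by move=> i _; ring.
  rewrite rsum_sub big_nat_recr //= big_nat_recl //=.
  rewrite hm D1 h0 D0.
  under [X in _ = X]rsum_ext => i _ do rewrite Rmult_minus_distr_r.
  rewrite rsum_sub /=; ring.
rewrite E1.
set b := fun i => ind (d <= x i - x i.-1 /\ x i.+1 - x i < d).
set c := fun i => ind (x i - x i.-1 < d /\ d <= x i.+1 - x i).
have E2 : forall i, a i - a i.+1 = b i - c i.
  move=> i; rewrite /a /b /c /ind /=.
  do 4 case: excluded_middle_informative => ?; try (simpl; ring); exfalso; try tauto; try lra.
rewrite (rsum_ext _ _ _ (fun i => b i * D N (x i) - c i * D N (x i))); last first.
  by move=> i _; rewrite E2; ring.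
rewrite rsum_sub.
have E3 : \big[Rplus/0]_(1 <= i < m) (c i * D N (x i)) =
          \big[Rplus/0]_(1 <= i < m) (b i * D N (1 - x i)).
  rewrite big_nat_rev; apply: rsum_ext => i /andP[hi1 hi2].
  have -> : (1 + m - i.+1 = m - i)%nat by lia.
  rewrite hsym; last lia.
  congr Rmult; rewrite /b /c; apply: ind_ext.
  have -> : (m - i).-1 = (m - i.+1)%nat by lia.
  have -> : (m - i).+1 = (m - i.-1)%nat by lia.
  rewrite !hsym; try lia.
  split; lra.
rewrite E3 -rsum_sub rsum_mull; apply: rsum_ext => i /andP[hi1 hi2].
have hxi : 0 <= x i <= 1.
  split; [rewrite -h0 | rewrite -hm]; apply: (incr_le hx); lia.
rewrite -Rmult_minus_distr_l D_B1 //.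
have -> : (i - 1)%nat = i.-1 by lia.
have -> : (i + 1)%nat = i.+1 by lia.
rewrite /b.
case: Rle_dec => h1; case: Rlt_dec => h2 /=.
- rewrite ind_T //; ring.
- rewrite ind_F; [ring | tauto].
- rewrite ind_F; [ring | tauto].
- rewrite ind_F; [ring | tauto].
Qed.

Lemma rat2R_fr p q : (0 < q)%nat -> rat2R (fr p q) = INR p / INR q.
Proof.
move=> hq; have e := fr_numden p q hq.
have e' := congr1 int2Z e; rewrite !int2Z_mul in e'.
have hd : (0 < int2Z (denq (fr p q)))%Z.
  rewrite int2Z_E; have := denq_gt0 (fr p q); lia.
rewrite /rat2R.
move: e' hd; move: (int2Z (numq (fr p q))) (int2Z (denq (fr p q))) => n d e' hd.
have eR : IZR n * INR q = INR p * IZR d.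
  by rewrite !INR_IZR_INZ -!mult_IZR e'.
have hq' : 0 < INR q by apply: lt_0_INR; apply/ssrnat.ltP.
have hd' : 0 < IZR d by apply: IZR_lt.
have E1 : IZR n / IZR d = IZR n * INR q / (IZR d * INR q) by field; lra.
have E2 : INR p / INR q = INR p * IZR d / (IZR d * INR q) by field; lra.
by rewrite E1 E2 eR.
Qed.

Lemma Rdiv_lt_cross a b c d : 0 < b -> 0 < d -> a * d < c * b -> a / b < c / d.
Proof.
move=> hb hd h.
have E1 : a / b = a * d * / (b * d) by field; lra.
have E2 : c / d = c * b * / (b * d) by field; lra.
rewrite E1 E2; apply: Rmult_lt_compat_r => //.
apply: Rinv_0_lt_compat; nra.
Qed.

Lemma rho_fnth k i : rho k i = rat2R (fnth k i).
Proof. by []. Qed.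

Lemma rho_incr k : (0 < k)%nat -> incr (rho k) (A k).
Proof.
move=> hk i hi; rewrite !rho_fnth.
have [a [b [p [q [hb hq e1 e2 hlt]]]]] := fnth_pair hk hi.
rewrite e1 e2 !rat2R_fr //.
apply: Rdiv_lt_cross; try (apply: lt_0_INR; apply/ssrnat.ltP; done).
by rewrite -!mult_INR; apply: lt_INR; apply/ssrnat.ltP.
Qed.

Lemma rho_0 k : (0 < k)%nat -> rho k 0 = 0.
Proof.
move=> hk; rewrite rho_fnth fnth0 // -(proj1 fr01) rat2R_fr //=; field.
Qed.

Lemma rho_A k : (0 < k)%nat -> rho k (A k) = 1.
Proof.
move=> hk; rewrite rho_fnth fnthA // -(proj2 fr01) rat2R_fr //=; field.
Qed.

Lemma rho_sym k i : (0 < k)%nat -> (i <= A k)%nat -> rho k (A k - i) = 1 - rho k i.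
Proof.
move=> hk hi; rewrite !rho_fnth.
have [p [q [hq hp e1 e2]]] := fnth_sym_fr hk hi.
rewrite e1 e2 !rat2R_fr // INR_subn //.
have : 0 < INR q by apply: lt_0_INR; apply/ssrnat.ltP.
move=> h; field; lra.
Qed.

Lemma hasfrac_rho N k t : (0 < k)%nat -> (k <= N)%nat -> 0 <= t <= 1 ->
  (exists q, (1 <= q <= k)%nat /\ has_frac (fun y => t - / INR N < y <= t) q) <->
  (exists i, (i <= A k)%nat /\ t - / INR N < rho k i <= t).
Proof.
move=> hk hkN ht; have hN' : 0 < INR N by apply: lt_0_INR; apply/ssrnat.ltP; lia.
split.
- move=> [q [hq [hq0 [z [hz1 hz2]]]]].
  have hq' : 0 < INR q by apply: lt_0_INR; apply/ssrnat.ltP; lia.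
  have hqN : / INR N <= / INR q.
    apply: Rinv_le_contravar => //; apply: le_INR; apply/ssrnat.leP; lia.
  have hzq : IZR z / INR q * INR q = IZR z by field; lra.
  have hz0 : (0 <= z)%Z.
    have : -1 < IZR z.
      have : - / INR q < IZR z / INR q by lra.
      move=> h; have := Rmult_lt_compat_r (INR q) _ _ hq' h.
      rewrite hzq; have -> : - / INR q * INR q = -1 by field; lra.
      done.
    move=> h; have : (-1 < z)%Z by apply: lt_IZR.
    lia.
  have hzq2 : (z <= Z.of_nat q)%Z.
    apply: le_IZR; rewrite -INR_IZR_INZ.
    have h : IZR z / INR q <= 1 by lra.
    have := Rmult_le_compat_r (INR q) _ _ (Rlt_le _ _ hq') h.
    by rewrite hzq Rmult_1_l.
  have [i [hi e]] := @fr_index k (Z.to_nat z) q hq ltac:(lia).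
  exists i; split => //.
  rewrite rho_fnth e rat2R_fr; last lia.
  by rewrite (INR_IZR_INZ (Z.to_nat z)) Z2Nat.id.
- move=> [i [hi [h1 h2]]].
  have [q [p [hq hp e]]] := fnth_form hi hk.
  exists q; split => //; split; first lia.
  exists (Z.of_nat p); rewrite -INR_IZR_INZ.
  rewrite rho_fnth e rat2R_fr in h1 h2; try lia.
  split; lra.
Qed.

Lemma qset_sum N E : has_frac E N ->
  INR (qset E) = \big[Rplus/0]_(0 <= k < N.+1)
                   ind (~ exists q, (1 <= q <= k)%nat /\ has_frac E q).
Proof.
move=> hN; rewrite /qset.
case: excluded_middle_informative => hex; last by exfalso; apply: hex; exists N.
pose P q := if excluded_middle_informative (has_frac E q) then true else false.
have exP : exists q, P q.
  by exists N; rewrite /P; case: excluded_middle_informative.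
case: (ex_minnP exP) => q0 hq0 hmin.
have hq0' : has_frac E q0 by move: hq0; rewrite /P; case: excluded_middle_informative.
set e := epsilon _ _.
have [he hm] : has_frac E e /\ (forall m, has_frac E m -> (e <= m)%coq_nat).
  rewrite /e; apply: (@epsilon_spec nat (inhabits 0%nat) (fun q => has_frac E q /\ forall m, has_frac E m -> le q m)); exists q0; split; first done; move=> m hm.
  apply/ssrnat.leP; apply: hmin; rewrite /P; by case: excluded_middle_informative.
have heN : (e <= N)%nat by apply/ssrnat.leP; apply: hm.
have he0 : (0 < e)%nat by case: he => h _; lia.
rewrite (rsum_ext _ _ _ (fun k => ind ((k < e)%nat))).
  by rewrite count_min; congr INR; lia.
move=> k _; apply: ind_ext; split.
- move=> hn; case: (ltnP k e) => // hke; exfalso; apply: hn.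
  exists e; split => //; lia.
- move=> hke hc; case: hc => q [hq hf]. have := hm q hf. move/ssrnat.leP => h. lia.
Qed.

Lemma sum_n_m_big (f : nat -> R) a b :
  sum_n_m f a b = \big[Rplus/0]_(a <= i < b.+1) f i.
Proof.
elim: b => [|b IH].
  case: a => [|a].
    by rewrite sum_n_n big_nat1.
  rewrite sum_n_m_zero; last lia.
  by rewrite big_geq.
case: (ltngtP a b.+1) => h.
- rewrite sum_n_Sm; last by apply/ssrnat.leP; lia.
  by rewrite IH [RHS]big_nat_recr //=; lia.
- rewrite sum_n_m_zero; last by apply/ssrnat.ltP.
  by rewrite big_geq.
- by rewrite h sum_n_n big_nat1.
Qed.

Lemma rsum_const a b c : \big[Rplus/0]_(a <= i < b) c = INR (b - a) * c.
Proof.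
rewrite big_const_nat; elim: (b - a)%nat => [|n IH] /=; first ring.
rewrite IH; case: n {IH} => [|n] /=; ring.
Qed.

Section Main.

Definition Gk (N k : nat) (t : R) : R :=
  \big[Rplus/0]_(1 <= i < (A k).+1) H (rho k i.-1 + / INR N) (rho k i) t.

Lemma qval N E t : (0 < N)%nat -> 0 < t <= 1 -> has_frac E N ->
  (forall q, has_frac E q <-> has_frac (fun y => t - / INR N < y <= t) q) ->
  INR (qset E) = 1 + \big[Rplus/0]_(1 <= k < N.+1) Gk N k t.
Proof.
move=> hN ht hEN hE.
rewrite (qset_sum N E hEN) big_nat_recl // ind_T; last first.
  by move=> [q [hq _]]; lia.
congr Rplus; rewrite big_add1 /=; apply: rsum_ext => k /andP[_ hk].
have hk0 : (0 < k.+1)%nat by [].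
rewrite /Gk -pointwise; first last.
- split; lra.
- apply: Rinv_0_lt_compat; apply: lt_0_INR; exact/ssrnat.ltP.
- exact: rho_A.
- exact: rho_0.
- exact: rho_incr.
apply: ind_ext.
have := @hasfrac_rho N k.+1 t hk0 hk ltac:(split; lra).
move=> hh; split => hn hc; apply: hn.
- move: hc => /(proj2 hh) [q [hq hf]]; exists q; split => //; exact/hE.
- apply: (proj1 hh); move: hc => [q [hq hf]]; exists q; split => //; exact/hE.
Qed.

End Main.

Lemma A_pos k : (0 < k)%nat -> (0 < A k)%nat.
Proof. move=> hk; rewrite /A big_ltn // addn_gt0 totient_gt0 //. Qed.

Lemma rho_range k i : (0 < k)%nat -> (i <= A k)%nat -> 0 <= rho k i <= 1.
Proof.
move=> hk hi; split.
  rewrite -(rho_0 k hk); apply: (incr_le (rho_incr k hk)) => //.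
rewrite -(rho_A k hk); apply: (incr_le (rho_incr k hk)) => //.
Qed.

Definition Ik (N k i : nat) : R :=
  ind (rho k i.-1 + / INR N <= rho k i) * (rho k i - (rho k i.-1 + / INR N)).

Theorem proposition5 (N : nat) (HN : (0 < N)%nat) :
  R_N N =
  -2 * sum_n_m (fun k =>
         sum_n_m (fun i =>
           if Rle_dec (/ INR N) (rho k i - rho k (i - 1)%nat)
           then if Rlt_dec (rho k (i + 1)%nat - rho k i) (/ INR N)
                then B1_saw (INR N * rho k i) else 0
           else 0)
         1%nat (A k - 1)%nat)
       1%nat N.
Proof.
have hN' : 0 < INR N by apply: lt_0_INR; apply/ssrnat.ltP.
have hd : 0 < / INR N by apply: Rinv_0_lt_compat.
have hS : S_N N = INR N + \big[Rplus/0]_(1 <= k < N.+1)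
    \big[Rplus/0]_(1 <= i < (A k).+1) \big[Rplus/0]_(1 <= j < N.+1)
      H (rho k i.-1 + / INR N) (rho k i) (INR j / INR N).
  rewrite /S_N sum_n_m_big.
  rewrite (rsum_ext _ _ _ (fun j => 1 + \big[Rplus/0]_(1 <= k < N.+1) Gk N k (INR j / INR N))).
    rewrite big_split /= rsum_const Rmult_1_r subn1 /=; congr Rplus.
    rewrite exchange_big_nat /=; apply: rsum_ext => k _.
    rewrite /Gk exchange_big_nat /=; done.
  move=> j /andP[hj1 hj2].
  have hj : 0 < INR j by apply: lt_0_INR; apply/ssrnat.ltP.
  have hjN : INR j <= INR N by apply: le_INR; apply/ssrnat.leP.
  have e : INR (j - 1) / INR N = INR j / INR N - / INR N.
    rewrite INR_subn // /=; field; lra.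
  apply: qval => //.
  - split; first by apply: Rdiv_lt_0_compat.
    apply/(INR_div_le_r 1 (INR j) (INR N) hN'); lra.
  - split; first lia.
    exists (Z.of_nat j); rewrite -INR_IZR_INZ e; split; lra.
  - by move=> q; rewrite e.
have hI : RInt (fun t => INR (qtd t (/ INR N))) 0 1 =
    1 + \big[Rplus/0]_(1 <= k < N.+1) \big[Rplus/0]_(1 <= i < (A k).+1) Ik N k i.
  apply: is_RInt_unique.
  apply: (is_RInt_ext (fun t => 1 + \big[Rplus/0]_(1 <= k < N.+1) Gk N k t)).
    move=> x; rewrite Rmin_left ?Rmax_right; try lra; move=> hx.
    rewrite /qtd; symmetry; apply: qval => //; first lra.
    split; first lia.
    have [h1 h2] := archimed (INR N * x).
    exists (up (INR N * x) - 1)%Z; rewrite minus_IZR.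
    move: h1 h2; set u := IZR (up (INR N * x)) => h1 h2.
    have E1 : (u - 1) / INR N = x - / INR N + (u - INR N * x) / INR N by field; lra.
    have E2 : (u - 1) / INR N = x - (INR N * x + 1 - u) / INR N by field; lra.
    have P1 : 0 < (u - INR N * x) / INR N by apply: Rdiv_lt_0_compat; lra.
    have P2 : 0 <= (INR N * x + 1 - u) / INR N by apply: Rdiv_le_0_compat; lra.
    split; lra.
  have -> : 1 + \big[Rplus/0]_(1 <= k < N.+1) \big[Rplus/0]_(1 <= i < (A k).+1) Ik N k i
      = plus 1 (\big[Rplus/0]_(1 <= k < N.+1) \big[Rplus/0]_(1 <= i < (A k).+1) Ik N k i) by [].
  apply: is_RInt_plus.
    have := is_RInt_const 0 1 1; rewrite /scal /= /mult /= Rminus_0_r Rmult_1_r; exact.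
  apply: is_RInt_rsum => k /andP[hk1 hk2].
  apply: is_RInt_rsum => i /andP[hi1 hi2].
  rewrite /Ik; apply: is_RInt_H.
    have := @rho_range k i.-1 hk1 ltac:(lia); lra.
  have := @rho_range k i hk1 ltac:(lia); lra.
rewrite /R_N hS hI.
transitivity (\big[Rplus/0]_(1 <= k < N.+1) \big[Rplus/0]_(1 <= i < (A k).+1)
   (\big[Rplus/0]_(1 <= j < N.+1) H (rho k i.-1 + / INR N) (rho k i) (INR j / INR N)
    - INR N * Ik N k i)).
  rewrite -[in RHS](rsum_ext 1 N.+1 (fun k => \big[Rplus/0]_(1 <= i < (A k).+1)
      \big[Rplus/0]_(1 <= j < N.+1) H (rho k i.-1 + / INR N) (rho k i) (INR j / INR N)
      - INR N * \big[Rplus/0]_(1 <= i < (A k).+1) Ik N k i)); last first.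
    by move=> k _; rewrite rsum_mull rsum_sub.
  rewrite rsum_sub -rsum_mull; ring.
rewrite sum_n_m_big rsum_mull; apply: rsum_ext => k /andP[hk1 hk2].
rewrite /Ik list_contrib //; last first.
- exact: rho_A.
- exact: rho_0.
- exact: rho_incr.
rewrite telescope //; last first.
- move=> i hi; exact: rho_sym.
- exact: rho_A.
- exact: rho_0.
- exact: rho_incr.
- exact: A_pos.
rewrite sum_n_m_big.
have -> : (A k - 1).+1 = A k by have := A_pos k hk1; lia.
done.
Qed.
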